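(* Define $g(1)=1$, $g(2^k-1)=(-1)^k$ for every integer $k>1$, and $g(n)=0$ for all other integers $n\ge 0$. Let $r(n)$ be the Golay–Rudin–Shapiro sequence, defined by $r(0)=1$, $r(2n)=r(n)$, $r(2n+1)=(-1)^n r(n)$ for $n\ge 0$. Then for all $n\ge 0$, $$\det\left(g(i+j+1)\right)_{i,j=0}^{n-1}=r(n),$$ where the determinant of the empty ($n=0$) matrix is $1$.
   Context: Equivalently, $r(n)=(-1)^{\rho(n)}$ where $\rho(n)$ is the number of (possibly overlapping) pairs of adjacent digits $11$ in the binary expansion of $n$. *)

(* Defs.v *)
From mathcomp Require Import all_boot all_order all_algebra.
Set Implicit Arguments. Unset Strict Implicit. Unset Printing Implicit Defensive.
Import Order.TTheory GRing.Theory Num.Theory.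
Local Open Scope ring_scope.

(* g(1) = 1, g(2^k - 1) = (-1)^k for k > 1, g(n) = 0 otherwise.
   For n >= 1, n = 2^k - 1 iff n.+1 = 2^k; the only candidate k is
   trunc_log 2 n.+1. *)
Definition g (n : nat) : int :=
  if n == 1%N then 1
  else let k := trunc_log 2 n.+1 in
       if (2 ^ k == n.+1)%N && (1 < k)%N then (-1) ^+ k else 0.

(* Golay-Rudin-Shapiro: r(0)=1, r(2n)=r(n), r(2n+1)=(-1)^n r(n).
   Defined by recursion with fuel (fuel n suffices since n./2 < n for n > 0). *)
Fixpoint r_aux (fuel n : nat) : int :=
  match fuel with
  | 0 => 1
  | fuel'.+1 =>
      if n == 0%N then 1
      else if odd n then (-1) ^+ n./2 * r_aux fuel' n./2
      else r_aux fuel' n./2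
  end.

Definition r (n : nat) : int := r_aux n n.

Example r_small : [seq r i | i <- iota 0 16] =
  [:: 1; 1; 1; -1; 1; 1; -1; 1; 1; 1; 1; -1; -1; -1; 1; -1].
Proof. by []. Qed.
Example g_small : [seq g i | i <- iota 0 16] =
  [:: 0; 1; 0; 1; 0; 0; 0; -1; 0; 0; 0; 0; 0; 0; 0; 1].
Proof. by []. Qed.

(* Main.v *)
Require Import Defs.
From mathcomp Require Import all_boot all_order all_algebra zify.
Import GRing.Theory.
From mathcomp Require Import ring.
Local Open Scope ring_scope.

Lemma r_aux_eq f1 f2 n : (n <= f1)%N -> (n <= f2)%N -> r_aux f1 n = r_aux f2 n.
Proof.
elim: f1 f2 n => [|f1 IH] [|f2] n /=.
- by [].
- by rewrite leqn0 => /eqP -> .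
- by move=> _; rewrite leqn0 => /eqP ->.
- move=> h1 h2; case: eqP => // /eqP n0.
  have h: (n./2 <= f1)%N /\ (n./2 <= f2)%N.
    have: (n./2 < n)%N by rewrite ltn_half_double; lia.
    lia.
  by case: h => a b; rewrite (IH f2) //.
Qed.

Lemma r_rec n : (0 < n)%N ->
  r n = if odd n then (-1) ^+ n./2 * r n./2 else r n./2.
Proof.
case: n => [//|n] _.
rewrite {1}/r.
have -> : r_aux n.+1 n.+1 = if odd n.+1 then (-1) ^+ n.+1./2 * r_aux n n.+1./2
   else r_aux n n.+1./2 by [].
have e : r_aux n n.+1./2 = r n.+1./2.
  by apply: r_aux_eq => //; rewrite leq_half_double; lia.
by rewrite e.
Qed.

Lemma r_double m : r m.*2 = r m.
Proof.
case: m => [//|m].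
by rewrite r_rec ?odd_double ?doubleK //; rewrite doubleS.
Qed.

Lemma r_doubleS m : r m.*2.+1 = (-1) ^+ m * r m.
Proof.
by rewrite r_rec //= odd_double /= uphalf_double.
Qed.

Definition s (k : nat) : int := if k is 0 then 1 else (-1) ^+ k.+1.

Lemma s_rel k : s k = - s k.+1 * (-1) ^+ (2 ^ k).
Proof.
rewrite -signr_odd oddX /=.
case: k => [|k] /=; first by [].
by rewrite expr0 mulr1 [X in _ = - X]exprS mulN1r opprK.
Qed.

Lemma sgnE n : ((-1) ^+ n : int) = if odd n then -1 else 1.
Proof. by rewrite -signr_odd; case: (odd n); rewrite ?expr1 ?expr0. Qed.

Lemma r_split k t t' : (t + t' + 1 = 2 ^ k)%N ->
  r (2 ^ k + t) = s k * (-1) ^+ t * r t'.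
Proof.
elim: k t t' => [|k IH] t t'.
  rewrite expn0 => h; have [-> ->] : (t = 0 /\ t' = 0)%N by lia.
  by [].
move=> h.
have et := odd_double_half t; have et' := odd_double_half t'.
move: (t./2) (t'./2) et et' => u u' et et'.
rewrite expnS in h *.
move eP: (2 ^ k)%N IH h => P IH h.
have hpar : odd t' = ~~ odd t.
  have := congr1 odd h; rewrite !oddD /=.
  by case: (odd t); case: (odd t'); case: (odd P).
have sr := s_rel k; rewrite eP in sr.
rewrite sr in IH; move: (s k.+1) IH => S IH.
rewrite hpar in et'.
case ot: (odd t) et et' => et et'.
- have hu : (u + u' + 1 = P)%N by lia.
  have -> : (2 * P + t = (P + u).*2.+1)%N by lia.
  rewrite -et' -et add0n r_doubleS r_double (IH u u' hu).
  rewrite !sgnE !oddD odd_double.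
  by case: (odd P); case: (odd u) => /=; ring.
- have hu : (u + u' + 1 = P)%N by lia.
  have -> : (2 * P + t = (P + u).*2)%N by lia.
  rewrite -et' -et add0n r_double (IH u u' hu) add1n r_doubleS.
  rewrite !mulrA.
  have e : odd P = odd (u + u' + 1) by rewrite hu.
  rewrite !sgnE e !oddD odd_double.
  by case: (odd u); case: (odd u') => /=; ring.
Qed.

Lemma g_zero a m : (2 ^ a < m.+1 < 2 ^ a.+1)%N -> g m = 0.
Proof.
move=> /andP [h1 h2]; rewrite /g.
have m1 : (m != 1)%N.
  apply/eqP => em; subst m.
  case: a h1 h2 => [|a]; first by [].
  by rewrite expnS; have := expn_gt0 2 a; lia.
rewrite (negbTE m1).
case: eqP => //= e.
have : (2 ^ a < 2 ^ trunc_log 2 m.+1 < 2 ^ a.+1)%N by rewrite e h1 h2.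
by rewrite !ltn_exp2l //; move=> /andP [? ?]; exfalso; lia.
Qed.

Lemma g_val k m : (m.+1 = 2 ^ k.+1)%N -> g m = s k.
Proof.
move=> e; rewrite /g.
case: k e => [|k] e.
  have -> : m = 1%N by rewrite expn1 in e; lia.
  by [].
have m1 : (m != 1)%N by apply/eqP => em; subst m; rewrite !expnS in e; have := expn_gt0 2 k; lia.
rewrite (negbTE m1) e.
have -> : trunc_log 2 (2 ^ k.+2) = k.+2.
  by apply: trunc_log_eq => //; rewrite leqnn /= ltn_exp2l.
by rewrite eqxx.
Qed.

Lemma s_sq k : s k * s k = 1.
Proof. case: k => [|k] //=; rewrite -exprD -signr_odd oddD addbb. by []. Qed.

Lemma det_last_row (R : comRingType) n (F : 'M[R]_n.+1) (j0 : 'I_n.+1) :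
  (forall j, j != j0 -> F ord_max j = 0) ->
  \det F = F ord_max j0 * ((-1) ^+ (n + j0) * \det (row' ord_max (col' j0 F))).
Proof.
move=> H; rewrite (expand_det_row _ ord_max) (bigD1 j0) //= big1 ?addr0.
  by [].
by move=> j /H ->; rewrite mul0r.
Qed.

Lemma det_last_col (R : comRingType) n (F : 'M[R]_n.+1) (i0 : 'I_n.+1) :
  (forall i, i != i0 -> F i ord_max = 0) ->
  \det F = F i0 ord_max * ((-1) ^+ (i0 + n) * \det (row' i0 (col' ord_max F))).
Proof.
move=> H; rewrite (expand_det_col _ ord_max) (bigD1 i0) //= big1 ?addr0.
  by [].
by move=> i /H ->; rewrite mul0r.
Qed.


Definition idx p q (i : nat) : nat := if (i < p)%N then i else (q + (i - p))%N.
Definition Gm N p q : 'M[int]_N := \matrix_(i < N, j < N) g (idx p q i + idx p q j + 1).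

Lemma peel_zero A k p q N x y :
  (A.+1 = 2^k)%N -> (p <= q)%N -> (p <= N)%N -> (q + q + (N - p) + 1 = A.*2)%N ->
  x = idx p q N.+1 -> (y < N.+2)%N -> y != p ->
  g (x + idx p q y + 1) = 0.
Proof.
move=> hA hpq hpN hs -> hy ny.
have h1 : (2 ^ k.+1 = A.*2.+2)%N by rewrite expnS -hA; lia.
have h2 : (2 ^ k.+2 = A.*2.+2.*2)%N by rewrite expnS h1; lia.
rewrite /idx; case: ltnP => hN; first by exfalso; lia.
case: ltnP => hyp.
  by apply: (@g_zero k); rewrite h1 -hA; apply/andP; split; lia.
by apply: (@g_zero k.+1); rewrite h1 h2; apply/andP; split; lia.
Qed.

Lemma bump_lt h i : (i < h)%N -> bump h i = i.
Proof. by move=> H; rewrite /bump leqNgt H. Qed.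

Lemma bump_le h i : (bump h i <= i.+1)%N.
Proof. by rewrite /bump; case: (h <= i)%N. Qed.

Lemma idx_bump p q x : idx p q (bump p x) = idx p q.+1 x.
Proof.
rewrite /idx /bump; case: (leqP p x) => h /=.
  rewrite add1n ltnNge (leqW h) /=; lia.
by rewrite add0n h.
Qed.

Lemma aux4 (c a b d : int) : c * c = 1 -> a * b = -1 -> c * (a * (c * (b * d))) = - d.
Proof.
move=> hc hab; transitivity ((c * c) * (a * b) * d); first by ring.
by rewrite hc hab; ring.
Qed.

Lemma peel A k p q N : (A.+1 = 2^k)%N -> (p <= q)%N -> (p <= N)%N ->
  (q + q + (N - p) + 1 = A.*2)%N ->
  \det (Gm N.+2 p q) = - \det (Gm N p q.+1).
Proof.
move=> hA hpq hpN hs.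
have h1 : (2 ^ k.+1 = A.*2.+2)%N by rewrite expnS -hA; lia.
have pN2 : (p < N.+2)%N by lia.
have pN1 : (p < N.+1)%N by lia.
rewrite (@det_last_row _ _ _ (inord p)); last first.
  move=> j nj; rewrite mxE /=.
  apply: (@peel_zero A k p q N _ j hA hpq hpN hs erefl (ltn_ord j)).
  by apply/eqP => e; move/eqP: nj; apply; apply/val_inj; rewrite /= inordK.
rewrite (@det_last_col _ _ _ (inord p)); last first.
  move=> i ni; rewrite !mxE /=.
  have -> : bump (@inord N.+1 p) N = N.+1 by rewrite /bump inordK // hpN.
  have -> : bump N.+1 i = i by rewrite /bump leqNgt ltn_ord.
  rewrite (addnC (idx p q i)).
  apply: (@peel_zero A k p q N _ i hA hpq hpN hs erefl); first by have := ltn_ord i; lia.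
  by apply/eqP => e; move/eqP: ni; apply; apply/val_inj; rewrite /= inordK.
have -> : row' (inord p) (col' ord_max (row' ord_max (col' (inord p) (Gm N.+2 p q))))
    = Gm N p q.+1.
  apply/matrixP => i j; rewrite !mxE /=.
  rewrite !inordK //.
  have hi := ltn_ord i; have hj := ltn_ord j.
  rewrite (@bump_lt N j) // (@bump_lt N.+1 (bump p i)) ?idx_bump //.
  have := bump_le p i; lia.
have hv : g (idx p q N.+1 + idx p q p + 1) = s k.
  apply: g_val; rewrite h1 /idx ltnn.
  case: ltnP => h; first by exfalso; lia.
  lia.
have c1 : Gm N.+2 p q ord_max (inord p) = s k by rewrite mxE /= inordK.
have c2 : row' ord_max (col' (inord p) (Gm N.+2 p q)) (inord p) ord_max = s k.
  rewrite !mxE /= !inordK // (@bump_lt N.+1 p) //.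
  have -> : bump p N = N.+1 by rewrite /bump hpN.
  by rewrite (addnC (idx p q p)).
rewrite c1 c2 !inordK //.
have hc := s_sq k; move: (s k) hc => c hc.
have hab : ((-1) ^+ (N.+1 + p) * (-1) ^+ (p + N) : int) = -1.
  rewrite -exprD.
  have -> : (N.+1 + p + (p + N) = (p + N).*2.+1)%N by lia.
  by rewrite sgnE /= odd_double.
move: ((-1) ^+ (N.+1 + p)) ((-1) ^+ (p + N)) (\det (Gm N p q.+1)) hab => a b d hab.
exact: aux4.
Qed.

Lemma peel_iter A k p : (A.+1 = 2 ^ k)%N -> forall j q, (q + q + j.*2 = A.*2)%N -> (p <= q)%N ->
  \det (Gm (p + j.*2).+1 p q) = (-1) ^+ j * \det (Gm p.+1 p (q + j)).
Proof.
move=> hA; elim=> [|j IH] q hq hpq.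
  by rewrite double0 !addn0 expr0 mul1r.
have -> : ((p + j.+1.*2).+1 = (p + j.*2).+1.+2)%N by rewrite doubleS; lia.
rewrite (@peel A k p q (p + j.*2).+1 hA hpq); [|lia|lia].
rewrite (IH q.+1); [|lia|lia].
by rewrite addSnnS exprS mulN1r mulNr.
Qed.

Lemma peel_final A k p : (A.+1 = 2 ^ k)%N -> (p <= A)%N ->
  \det (Gm p.+1 p A) = s k * \det (Gm p p A).
Proof.
move=> hA hpA.
have h1 : (2 ^ k.+1 = A.*2.+2)%N by rewrite expnS -hA; lia.
rewrite (@det_last_row _ _ _ ord_max); last first.
  move=> j nj; rewrite mxE /=.
  have hj : (j < p)%N by have := ltn_ord j; move: nj; rewrite -val_eqE /= => nj; lia.
  rewrite /idx ltnn hj subnn addn0.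
  by apply: (@g_zero k); rewrite h1 -hA; apply/andP; split; lia.
have -> : row' ord_max (col' ord_max (Gm p.+1 p A)) = Gm p p A.
  apply/matrixP => i j; rewrite !mxE /=.
  by rewrite !(@bump_lt p) //.
rewrite mxE /= /idx ltnn subnn addn0.
rewrite (@g_val k) ?h1; last by lia.
by rewrite -signr_odd addnn odd_double expr0 mul1r.
Qed.

Lemma Gm_id n p q : (p = n \/ p = q)%N ->
  \matrix_(i < n, j < n) g (i + j + 1)%N = Gm n p q.
Proof.
move=> hpq; apply/matrixP => i j; rewrite !mxE /idx.
have hi := ltn_ord i; have hj := ltn_ord j.
by case: hpq => ->; case: ltnP => ?; case: ltnP => ? //; congr g; lia.
Qed.

Theorem theorem5p11 (n : nat) :
  \det (\matrix_(i < n, j < n) g (i + j + 1)%N) = r n.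
Proof.
elim/ltn_ind: n => n IHn.
case: n IHn => [|n] IHn; first by rewrite det_mx00.
have hb := @trunc_log_bounds 2 n.+1 isT isT.
move: (trunc_log 2 n.+1) hb => k /andP [hk1 hk2].
have hpos : (0 < 2 ^ k)%N by rewrite expn_gt0.
rewrite expnS in hk2.
have [A hA] : exists A, (A.+1 = 2 ^ k)%N by exists (2 ^ k).-1; lia.
have [t [p [ht hp]]] : exists t p, (n.+1 = 2 ^ k + t /\ t + p + 1 = 2 ^ k)%N.
  by exists (n.+1 - 2 ^ k)%N, (2 ^ k - 1 - (n.+1 - 2 ^ k))%N; lia.
rewrite ht (@r_split k t p hp).
have en : (2 ^ k + t = (p + t.*2).+1)%N by lia.
rewrite en (@Gm_id _ p p); last by right.
rewrite (@peel_iter A k p hA t p) //; last by lia.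
have -> : (p + t = A)%N by lia.
rewrite (@peel_final A k p hA) //; last by lia.
rewrite -(@Gm_id p p A); last by left.
rewrite IHn; last by lia.
by rewrite mulrCA mulrA.
Qed.
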